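(* For any two metric directed multigraphs $X=(V,E,r,\ell)$ and $X'$, \[d_{\mathrm{GH}}(X,X')\le\tfrac12|E|\,d_{\vec{\mathcal G}}(X,X'),\] where on the left $X$ and $X'$ are viewed as metric spaces.
   Context: A metric directed multigraph (MDM) is $(V,E,r,\ell)$ with $V,E$ finite, $r=(r_1,r_2):E\to V\times V$ (tail, head), $\ell:E\to(0,\infty)$. $d_{\vec{\mathcal G}}(X,X')=\inf_{(f,g)}\sup_{e\in E}|\ell(e)-\ell'(g(e))|$, infimum over pairs of bijections $f:V\to V'$, $g:E\to E'$ with $r'(g(e))=(f(r_1(e)),f(r_2(e)))$, and $=+\infty$ if there is no such pair. An MDM is viewed as a metric space by replacing each edge $e$ by a line segment of length $\ell(e)$ glued at its endpoint vertices, forgetting orientations, with the induced path (length) metric. $d_{\mathrm{GH}}$ is the Gromov–Hausdorff distance. *)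

(* Defs.v *)
From HB Require Import structures.
From mathcomp Require Import all_boot all_order all_algebra.
From mathcomp Require Import all_classical all_reals ereal.
Set Implicit Arguments. Unset Strict Implicit. Unset Printing Implicit Defensive.
Import Order.TTheory GRing.Theory Num.Theory.
Local Open Scope classical_set_scope.
Local Open Scope ring_scope.

Record mdm (R : realType) := MDM {
  mV : finType;
  mE : finType;
  mr : mE -> mV * mV;            (* (tail, head) *)
  ml : mE -> R;
  ml_pos : forall e, 0 < ml e }.
Arguments mV {R} m.
Arguments mE {R} m.
Arguments mr {R} m e.
Arguments ml {R} m e.

Section MDM.
Variable R : realType.

(* d_{\vec G}: inf over compatible pairs of bijections of sup_e |l e - l' (g e)|
   (the sup over an empty edge set is taken to be 0); inf of the empty set is +oo. *)
Definition dG (X X' : mdm R) : \bar R :=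
  ereal_inf [set v : \bar R | exists (f : mV X -> mV X') (g : mE X -> mE X'),
     [/\ bijective f, bijective g,
         (forall e, mr X' (g e) = (f (mr X e).1, f (mr X e).2)) &
         v = (\big[Num.max/0]_(e : mE X) `|ml X e - ml X' (g e)|)%:E]].

(* The geometric realization.  Carrier before gluing: the vertices, plus the
   closed segments [0, l e], one for each edge e. *)
Definition point (X : mdm R) : Type :=
  (mV X + {et : mE X * R | 0 <= et.2 <= ml X et.1})%type.

Definition base_dist (X : mdm R) (p q : point X) : \bar R :=
  match p, q with
  | inl v, inl w => if v == w then 0%E else +oo%E
  | inr a, inr b => if (sval a).1 == (sval b).1
                    then (`|(sval a).2 - (sval b).2|)%:E else +oo%E
  | _, _ => +oo%E
  end.

Definition glue1 (X : mdm R) (p q : point X) : Prop :=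
  match p, q with
  | inr a, inl v =>
      ((sval a).2 = 0 /\ v = (mr X (sval a).1).1) \/
      ((sval a).2 = ml X (sval a).1 /\ v = (mr X (sval a).1).2)
  | _, _ => False
  end.

Definition glue (X : mdm R) (p q : point X) : Prop :=
  p = q \/ glue1 p q \/ glue1 q p.

Definition chain (X : mdm R) (p q : point X) (c : seq (point X * point X)) : Prop :=
  [/\ (0 < size c)%N, (head (p, p) c).1 = p, (last (q, q) c).2 = q &
      forall i, (i.+1 < size c)%N -> glue (nth (p, p) c i).2 (nth (p, p) c i.+1).1].

(* The quotient (glued) metric, i.e. the induced length metric of the metric
   graph; it is a pseudometric on [point X] whose metric quotient is the
   metric graph, and it takes the value +oo between different components. *)
Definition gdist (X : mdm R) (p q : point X) : \bar R :=
  ereal_inf [set s : \bar R | exists c, chain p q c /\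
                      s = (\sum_(x <- c) base_dist x.1 x.2)%E].

End MDM.

Section GH.
Variable R : realType.

Definition correspondence (A B : Type) (C : A -> B -> Prop) : Prop :=
  (forall a, exists b, C a b) /\ (forall b, exists a, C a b).

(* |a - b| for extended distances, with |+oo - +oo| := 0. *)
Definition disc (a b : \bar R) : \bar R :=
  if (a == +oo%E) && (b == +oo%E) then 0%E else `|(a - b)%E|%E.

Definition distortion (A B : Type) (dA : A -> A -> \bar R) (dB : B -> B -> \bar R)
  (C : A -> B -> Prop) : \bar R :=
  ereal_sup ([set 0%E] `|` [set s : \bar R | exists a b a' b',
     [/\ C a b, C a' b' & s = disc (dA a a') (dB b b')]]).

Definition dGH (A B : Type) (dA : A -> A -> \bar R) (dB : B -> B -> \bar R) : \bar R :=
  ((2^-1)%:E * ereal_inf [set s : \bar R | exists C : A -> B -> Prop,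
      correspondence C /\ s = distortion dA dB C])%E.

End GH.

(* Main.v *)
Require Import Defs.
From HB Require Import structures.
From mathcomp Require Import all_boot all_order all_algebra.
From mathcomp Require Import all_classical all_reals ereal.
From mathcomp Require Import lra zify ring.
Set Implicit Arguments. Unset Strict Implicit. Unset Printing Implicit Defensive.
Import Order.TTheory GRing.Theory Num.Theory.
Local Open Scope classical_set_scope.
Local Open Scope ring_scope.


Section Chains.
Variables (R : realType) (X : mdm R).
Local Notation P := (Defs.point X).

Fixpoint lk (y q : P) (c : seq (P * P)) : Prop :=
  match c with [::] => y = q | z :: c' => Defs.glue y z.1 /\ lk z.2 q c' end.

Definition mych (p q : P) c := [/\ (0 < size c)%N, (head (p, p) c).1 = p & lk p q c].

Lemma glue_refl (x : P) : Defs.glue x x.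
Proof. by left. Qed.

Lemma lk_nth (z : P * P) q c d :
  lk z.2 q c <-> ((last z c).2 = q /\
    forall i, (i.+1 < size (z :: c))%N -> Defs.glue (nth d (z :: c) i).2 (nth d (z :: c) i.+1).1).
Proof.
elim: c z => [|z' c IH] z /=.
  by split=> [->|[]//]; split.
rewrite IH; split.
  move=> [gz [lz H]]; split=> // -[|i] //= Hi; exact: H.
move=> [lz H]; split; first exact: (H 0%N).
by split=> // i Hi; apply: (H i.+1).
Qed.

Lemma chain_mych p q c : Defs.chain p q c <-> mych p q c.
Proof.
case: c => [|z c]; first by split => -[].
rewrite /chain /mych /=; split.
  move=> [_ h l H]; split=> //; split; first by rewrite h; apply glue_refl.
  by apply/(lk_nth _ _ _ (p, p)); split.
move=> [_ h [_ L]]; move/(lk_nth _ _ _ (p, p)): L => [l H]; by split.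
Qed.

Lemma lk_cat y q c1 c2 :
  lk y q (c1 ++ c2) <-> lk y (last y [seq x.2 | x <- c1]) c1 /\ lk (last y [seq x.2 | x <- c1]) q c2.
Proof.
elim: c1 y => [|z c1 IH] y /=; first by split=> // -[].
by rewrite IH; split=> [[a [b c]]|[[a b] c]].
Qed.

Definition okp (z : P * P) : bool :=
  match z with
  | (inl v, inl w) => v == w
  | (inr a, inr b) => (sval a).1 == (sval b).1
  | _ => false end.

Definition rc (z : P * P) : R :=
  match z with
  | (inr a, inr b) => `|(sval a).2 - (sval b).2|
  | _ => 0 end.

Lemma rc_ge0 z : 0 <= rc z.
Proof. by case: z => [[v|a] [w|b]] /=. Qed.

Lemma base_ok z : okp z -> base_dist z.1 z.2 = (rc z)%:E.
Proof. by case: z => [[v|a] [w|b]] //= /eqP ->; rewrite eqxx. Qed.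

Lemma base_ge0 (x y : P) : (0 <= base_dist x y)%E.
Proof.
case: x y => [v|a] [w|b] //=; case: ifP => //.
Qed.

Lemma base_nok z : ~~ okp z -> base_dist z.1 z.2 = +oo%E.
Proof. by case: z => [[v|a] [w|b]] //= /negbTE ->. Qed.

Lemma sum_ok c : all okp c ->
  (\sum_(x <- c) base_dist x.1 x.2)%E = (\sum_(x <- c) rc x)%:E.
Proof.
move=> H; rewrite -sumEFin; apply: eq_big_seq => z zc.
by apply: base_ok; move/allP: H; apply.
Qed.

Lemma sum_nok c : ~~ all okp c -> (\sum_(x <- c) base_dist x.1 x.2)%E = +oo%E.
Proof.
elim: c => [|z c IH] //=; rewrite big_cons negb_and => /orP[nz|nc].
  rewrite base_nok // addye //.
  suff : (0 <= \sum_(j <- c) base_dist j.1 j.2)%E by case: (\sum_(j <- c) _)%E.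
  by apply: sume_ge0 => t _; apply: base_ge0.
rewrite IH // addey //.
by have := base_ge0 z.1 z.2; case: (base_dist _ _).
Qed.

Lemma gdist_ge0 (p q : P) : (0 <= gdist p q)%E.
Proof.
apply: le_ereal_inf_tmp => s [c [_ ->]].
by apply: sume_ge0 => t _; apply: base_ge0.
Qed.



Definition onE (e : mE X) (z : P * P) : bool :=
  match z.1 with inr a => e == (sval a).1 | inl _ => false end.

Definition trav e c := \sum_(z <- c | onE e z) rc z.

Lemma onE_inr e z : onE e z -> okp z ->
  exists a b, z = (inr a, inr b) /\ (sval a).1 = e /\ (sval b).1 = e.
Proof.
case: z => [[v|a] [w|b]]; rewrite /onE /= => // /eqP e1 /eqP e2.
exists a, b. split=> //. by rewrite -e1 -e2.
Qed.

Lemma seg_bound (a b : {et : mE X * R | 0 <= et.2 <= ml X et.1}) e :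
  (sval a).1 = e -> (sval b).1 = e -> `|(sval a).2 - (sval b).2| <= ml X e.
Proof.
case: a => -[ea ta] /= /andP[ha1 ha2]; case: b => -[eb tb] /= /andP[hb1 hb2] ea' eb'.
subst; rewrite ler_norml; apply/andP; split; lra.
Qed.

Lemma filt_le (Q : pred (P * P)) s : \sum_(x <- s | Q x) rc x <= \sum_(x <- s) rc x.
Proof.
rewrite [leRHS](bigID Q) /= lerDl; apply: sumr_ge0 => i _; exact: rc_ge0.
Qed.

Lemma split_last (T : Type) (Q : pred T) s : has Q s ->
  exists s1 w s3, [/\ s = s1 ++ w :: s3, Q w & ~~ has Q s3].
Proof.
elim: s => [|x s IH] //= /orP.
case hs: (has Q s) => [|] [Qx|//].
- have [s1 [w [s3 [-> Qw ns3]]]] := IH hs; by exists (x :: s1), w, s3.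
- have [s1 [w [s3 [-> Qw ns3]]]] := IH hs; by exists (x :: s1), w, s3.
- by exists [::], x, s; rewrite hs.
Qed.

Lemma split3 (T : Type) (Q : pred T) s : has Q s ->
  exists s1 u m s3, [/\ s = s1 ++ u :: m ++ s3, ~~ has Q s1, Q u, Q (last u m) & ~~ has Q s3].
Proof.
elim: s => [|x s IH] //= H.
case Qx: (Q x).
  case hs: (has Q s).
    have [s1 [w [s3 [-> Qw ns3]]]] := split_last hs.
    exists [::], x, (rcons s1 w), s3; split => //.
      by rewrite /= cat_rcons.
    by rewrite last_rcons.
  by exists [::], x, [::], s; rewrite hs.
move: H; rewrite Qx /= => /IH [s1 [u [m [s3 [-> h1 Qu Ql h3]]]]].
by exists (x :: s1), u, m, s3; rewrite /= Qx.
Qed.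

Lemma reduce n p q c : (size c <= n)%N -> all okp c -> mych p q c ->
  exists c', [/\ all okp c', mych p q c',
     \sum_(x <- c') rc x <= \sum_(x <- c) rc x & forall e, trav e c' <= ml X e].
Proof.
elim: n c => [|n IH] c.
  by rewrite leqn0 => /eqP s0 _ []; rewrite s0.
move=> sc okc chc.
case: (boolP [forall e, trav e c <= ml X e]) => [/forallP H|].
  by exists c; split.
rewrite negb_forall => /existsP [e]; rewrite -ltNge => lt_e.
have hc : has (onE e) c.
  apply/negPn/negP => nh; move: lt_e; rewrite /trav big_hasC //.
  by have := ml_pos e; lra.
have [c1 [u [m [c3 [dc n1 Qu Ql n3]]]]] := split3 hc.
have oku : okp u by move/allP: okc; apply; rewrite dc mem_cat in_cons eqxx orbT.
have okl : okp (last u m).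
  move/allP: okc; apply; rewrite dc mem_cat; apply/orP; right.
  by rewrite -cat_cons mem_cat mem_last.
have [a [b [du [ha hb]]]] := onE_inr Qu oku.
have [a' [b' [dl [ha' hb']]]] := onE_inr Ql okl.
set np : P * P := (inr a, inr b').
have tr : ml X e < \sum_(z <- u :: m) rc z.
  apply: (lt_le_trans lt_e); rewrite /trav dc big_cat /=.
  rewrite [X in X + _]big_hasC // add0r -cat_cons big_cat /=.
  rewrite [X in _ + X]big_hasC // addr0; exact: filt_le.
have mn : m != [::].
  apply/negP => /eqP m0; move: tr; rewrite m0 big_cons big_nil addr0 du /=.
  by have := seg_bound ha hb; lra.
have okn : okp np by rewrite /np /= ha hb'.
set c' := c1 ++ np :: c3.
have okc' : all okp c'.
  apply/allP => z; rewrite /c' mem_cat in_cons => /orP[z1|/orP[/eqP->//|z3]];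
  move/allP: okc; apply; rewrite dc mem_cat ?z1 //.
  by rewrite -cat_cons mem_cat z3 orbT orbT.
have sz : (size c' <= n)%N.
  move: sc; rewrite dc /c' !size_cat /= size_cat.
  have : (0 < size m)%N by case: (m) mn.
  move=> hm h; clear -hm h; lia.
have ch' : mych p q c'.
  move: chc; rewrite /mych dc /c' => -[_ hd]; rewrite !lk_cat /= lk_cat => -[l1 [g1 [l2 l3]]].
  split; first by rewrite size_cat addnS.
    by move: hd; case: (c1) => //=; rewrite du.
  apply/lk_cat; split => //=; split; first by move: g1; rewrite du.
  by move: l3; rewrite /= -[u.2]/((fun z : P * P => z.2) u) last_map dl.
have sm : \sum_(x <- c') rc x <= \sum_(x <- c) rc x.
  rewrite dc /c' !big_cat /= !big_cons lerD2l.
  rewrite big_cat /= addrA lerD2r.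
  move: tr; rewrite big_cons du /= => tr; have := seg_bound ha hb'.
  rewrite /np /=; lra.
have [c'' [ok'' ch'' sm'' tr'']] := IH c' sz okc' ch'.
exists c''; split => //; exact: le_trans sm'' sm.
Qed.

End Chains.
Arguments okp {R X}. Arguments rc {R X}. Arguments onE {R X}.


Section Map.
Variables (R : realType) (X Y : mdm R) (f : mV X -> mV Y) (g : mE X -> mE Y).
Hypothesis hc : forall e, mr Y (g e) = (f (mr X e).1, f (mr X e).2).

Definition sc (e : mE X) := ml Y (g e) / ml X e.

Lemma lX e : ml X e != 0. Proof. by have := ml_pos e; rewrite lt0r => /andP[]. Qed.

Lemma sc_mul e : ml X e * sc e = ml Y (g e).
Proof. by rewrite /sc mulrC mulfVK // lX. Qed.

Lemma sc_ge0 e : 0 <= sc e.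
Proof. by rewrite /sc divr_ge0 // ltW // ml_pos. Qed.

Lemma phi_proof (a : {et : mE X * R | 0 <= et.2 <= ml X et.1}) :
  0 <= (g (sval a).1, (sval a).2 * sc (sval a).1).2 <= ml Y (g (sval a).1, (sval a).2 * sc (sval a).1).1.
Proof.
case: a => -[e t] /= /andP[h1 h2]; apply/andP; split.
  by rewrite mulr_ge0 // sc_ge0.
by rewrite -sc_mul; apply: ler_wpM2r => //; rewrite sc_ge0.
Qed.

Definition phi (x : Defs.point X) : Defs.point Y :=
  match x with
  | inl v => inl (f v)
  | inr a => inr (exist _ (g (sval a).1, (sval a).2 * sc (sval a).1) (phi_proof a))
  end.

Definition phiz (z : Defs.point X * Defs.point X) := (phi z.1, phi z.2).

Lemma phi_glue x y : Defs.glue x y -> Defs.glue (phi x) (phi y).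
Proof.
have H : forall x y, Defs.glue1 x y -> Defs.glue1 (phi x) (phi y).
  case=> [v|a] [w|b] //=; rewrite hc /=.
  case=> -[-> ->]; [left|right]; split=> //; first by rewrite mul0r.
  by rewrite sc_mul.
case=> [->|[h|h]]; first by left.
  by right; left; apply: H.
by right; right; apply: H.
Qed.

Lemma phi_lk y q c : lk y q c -> lk (phi y) (phi q) (map phiz c).
Proof.
elim: c y => [|z c IH] y /=; first by move=> ->.
by case=> g1 l1; split; [exact: phi_glue | exact: IH].
Qed.

Lemma phi_mych p q c : mych p q c -> mych (phi p) (phi q) (map phiz c).
Proof.
case=> s h l; split; first by rewrite size_map.
  by case: c s h {l} => //= z c _ ->.
exact: phi_lk.
Qed.

Lemma phi_ok z : okp z -> okp (phiz z).
Proof. by case: z => [[v|a] [w|b]] //= /eqP ->. Qed.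

Definition wz (z : Defs.point X * Defs.point X) :=
  match z.1 with inr a => `|sc (sval a).1 - 1| | inl _ => 0 end.

Lemma phi_rc z : okp z -> rc (phiz z) <= rc z + rc z * wz z.
Proof.
case: z => [[v|a] [w|b]] //=; first by move=> _; rewrite mul0r addr0.
move=> /eqP eab; rewrite /wz /= -eab -mulrBl normrM.
have := sc_ge0 (sval a).1; set s := sc _ => s0.
rewrite (ger0_norm s0); set d := `|_ - _|.
rewrite -[d in d + _]mulr1 -mulrDr; apply: ler_wpM2l; first exact: normr_ge0.
rewrite addrC -lerBlDr; exact: ler_norm.
Qed.

Definition Dsum := \sum_(e : mE X) `|ml X e - ml Y (g e)|.

Lemma wz_sum c : (forall e, trav e c <= ml X e) ->
  \sum_(z <- c) rc z * wz z <= Dsum.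
Proof.
move=> H.
have -> : \sum_(z <- c) rc z * wz z =
   \sum_(z <- c) \sum_(e : mE X) (if onE e z then rc z * `|sc e - 1| else 0).
  apply: eq_bigr => z _; rewrite /wz /onE.
  case: z.1 => [v|a]; first by rewrite mulr0 big1.
  by rewrite -big_mkcond big_pred1_eq.
rewrite exchange_big /Dsum; apply: ler_sum => e _.
rewrite -big_mkcond -mulr_suml.
have -> : `|ml X e - ml Y (g e)| = ml X e * `|sc e - 1|.
  rewrite -[X in X * _]ger0_norm ?ltW ?ml_pos // -normrM mulrBr sc_mul mulr1 distrC //.
by apply: ler_wpM2r => //; exact: H.
Qed.

Lemma map_bound c : all okp c -> (forall e, trav e c <= ml X e) ->
  \sum_(z <- map phiz c) rc z <= \sum_(z <- c) rc z + Dsum.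
Proof.
move=> ok H; apply: le_trans (lerD (lexx _) (wz_sum H)).
rewrite big_map -big_split /= [leLHS]big_seq_cond [leRHS]big_seq_cond.
apply: ler_sum => z /andP[zc _].
by apply: phi_rc; move/allP: ok; apply.
Qed.

End Map.


Lemma inf_add (R : realType) (S : set (\bar R)) x (d : R) :
  (forall s, S s -> (x <= s + d%:E)%E) -> (x <= ereal_inf S + d%:E)%E.
Proof.
move=> H; rewrite -leeBlDr //; apply: le_ereal_inf_tmp => s Ss.
by rewrite leeBlDr //; exact: H.
Qed.

Section G.
Variables (R : realType) (X Y : mdm R) (f : mV X -> mV Y) (g : mE X -> mE Y).
Hypothesis hc : forall e, mr Y (g e) = (f (mr X e).1, f (mr X e).2).

Lemma gdist_phi p q :
  (gdist (phi f g p) (phi f g q) <= gdist p q + (Dsum g)%:E)%E.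
Proof.
rewrite [X in (_ <= X + _)%E]/gdist; apply: inf_add => s [c [ch ->]].
case: (boolP (all okp c)) => ok; last first.
  rewrite sum_nok //.
  by rewrite addye // leey.
rewrite sum_ok //.
have mc := (chain_mych p q c).1 ch.
have [c' [ok' ch' sm tr]] := reduce (leqnn _) ok mc.
have okm : all okp (map (phiz f g) c').
  rewrite all_map; apply/allP => z zc; apply: phi_ok; by move/allP: ok'; apply.
apply: (@le_trans _ _ (\sum_(x <- map (phiz f g) c') base_dist x.1 x.2)%E).
  apply: ereal_inf_lbound; exists (map (phiz f g) c'); split => //.
  apply/chain_mych. exact: (phi_mych hc ch').
rewrite sum_ok // -EFinD lee_fin; apply: (le_trans (map_bound f g ok' tr)).
by rewrite lerD2r.
Qed.

End G.

Lemma phiK (R : realType) (X Y : mdm R) (f : mV X -> mV Y) (g : mE X -> mE Y)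
  fi gi : cancel f fi -> cancel g gi -> cancel (phi f g) (phi fi gi).
Proof.
move=> fK gK [v|a] /=; first by rewrite fK.
congr inr; apply: val_inj => /=; rewrite gK.
case: a => -[e t] /= _; congr pair; rewrite /sc gK.
have h1 := lX e; have h2 := lX (g e); field; by apply/andP.
Qed.

Lemma disc_bound (R : realType) (u v : \bar R) (k : R) : (0 <= u)%E -> (0 <= v)%E ->
  (v <= u + k%:E)%E -> (u <= v + k%:E)%E -> 0 <= k -> (disc u v <= k%:E)%E.
Proof.
case: u => [r| |] //; case: v => [s| |] //=; rewrite /disc /=.
- rewrite !lee_fin => _ _ h1 h2 _; rewrite ler_norml; apply/andP; split; lra.
Qed.


Lemma comb (R : realType) (a : \bar R) (c : R) (S : set (\bar R)) : 0 < c ->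
  (forall v, S v -> (a <= c%:E * v)%E) -> (a <= c%:E * ereal_inf S)%E.
Proof.
move=> c0 H.
have c0' : (0 < c%:E)%E by rewrite lte_fin.
have h : ((c^-1)%:E * a <= ereal_inf S)%E.
  apply: le_ereal_inf_tmp => v Sv.
  rewrite -(lee_pmul2l (x:=c%:E)) // muleA -EFinM mulfV ?gt_eqF // mul1e.
  exact: H.
rewrite -[a]mul1e -(@mulfV _ c (lt0r_neq0 c0)) EFinM -muleA.
by apply: lee_wpmul2l => //; rewrite lee_fin ltW.
Qed.

Lemma key (R : realType) (X Y : mdm R) (f : mV X -> mV Y) (g : mE X -> mE Y) :
  bijective f -> bijective g ->
  (forall e, mr Y (g e) = (f (mr X e).1, f (mr X e).2)) ->
  (dGH (@gdist R X) (@gdist R Y) <=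
     (#|mE X|%:R / 2)%:E * (\big[Num.max/0]_(e : mE X) `|ml X e - ml Y (g e)|)%:E)%E.
Proof.
case=> fi fK fiK; case=> gi gK giK hc.
set d := \big[Num.max/0]_(e : mE X) _.
set K := #|mE X|.
have dl : forall e, `|ml X e - ml Y (g e)| <= d by move=> e; exact: le_bigmax.
have d0 : 0 <= d by apply/bigmax_geP; left.
have D1 : Dsum g <= K%:R * d.
  rewrite /Dsum; apply: le_trans (ler_sum _ (fun e _ => dl e)) _.
  by rewrite sumr_const mulr_natl.
have hci : forall e, mr X (gi e) = (fi (mr Y e).1, fi (mr Y e).2).
  move=> e; have := hc (gi e); rewrite giK => ->; by rewrite /= !fK; case: (mr X (gi e)).
have D2 : Dsum (X:=Y) gi <= K%:R * d.
  rewrite /Dsum.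
  have dl' : forall e, `|ml Y e - ml X (gi e)| <= d.
    by move=> e; have := dl (gi e); rewrite giK distrC.
  apply: le_trans (ler_sum _ (fun e _ => dl' e)) _.
  rewrite sumr_const mulr_natl /K (bij_eq_card (f := g)) //; by exists gi.
have Kd0 : 0 <= K%:R * d by rewrite mulr_ge0.
set C := fun a b => b = phi f g a.
have corr : correspondence C.
  split; first by move=> a; exists (phi f g a).
  by move=> b; exists (phi fi gi b); rewrite /C (phiK fiK giK).
have dist : (distortion (@gdist R X) (@gdist R Y) C <= (K%:R * d)%:E)%E.
  apply: ge_ereal_sup => s [->|[a [b [a' [b' [-> -> ->]]]]]]; first by rewrite lee_fin.
  apply: disc_bound => //; try exact: gdist_ge0.
    apply: le_trans (gdist_phi hc a a') _; apply: leeD => //; by rewrite lee_fin.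
  have := gdist_phi hci (phi f g a) (phi f g a'); rewrite !(phiK fK gK) => h.
  apply: le_trans h _; apply: leeD => //; by rewrite lee_fin.
have inf : (ereal_inf [set s : \bar R | exists C : Defs.point X -> Defs.point Y -> Prop,
      correspondence C /\ s = distortion (@gdist R X) (@gdist R Y) C] <= (K%:R * d)%:E)%E.
  apply: ge_ereal_inf; exists (distortion (@gdist R X) (@gdist R Y) C) => //.
  by exists C.
rewrite /dGH; apply: le_trans (lee_wpmul2l _ inf) _; first by rewrite lee_fin invr_ge0.
by rewrite -!EFinM lee_fin mulrAC mulrC.
Qed.

Theorem lemma5p1 (R : realType) (X X' : mdm R) :
  (dG X X' != +oo)%E \/ (0 < #|mE X|)%N ->
  (dGH (@gdist R X) (@gdist R X') <= (#|mE X|%:R / 2)%:E * dG X X')%E.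
Proof.
move=> hyp.
rewrite /dG; set S := [set v : \bar R | _].
have keyS : forall v, S v ->
    (dGH (@gdist R X) (@gdist R X') <= (#|mE X|%:R / 2)%:E * v)%E.
  move=> v [f [g [bf bg hc ->]]]; exact: (key bf bg hc).
case: (boolP (0 < #|mE X|)%N) => [Kp|].
  by apply: comb => //; rewrite divr_gt0 // ltr0n.
rewrite lt0n negbK => /eqP K0.
case: hyp => [h|]; last by rewrite K0.
have [v Sv] : exists v, S v.
  case: (pselect (exists v, S v)) => // nS; move: h.
  rewrite /dG -/S (_ : S = set0) ?ereal_inf0 //.
  by rewrite -subset0 => x Sx; apply: nS; exists x.
have := keyS v Sv; rewrite K0 mul0r mul0e => h1.
by rewrite mul0e.
Qed.
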